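(* Let $\mathcal{D}$ be a domain, let $a\in\mathrm{IET}(\mathcal{D})$ be stable, with irreducible components $I_1,\dots,I_r$. Let $g\in\mathrm{IET}(\mathcal{D})$ be such that $gag^{-1}$ commutes with $a$. Then for every $i$, either $g(I_i)$ is disjoint from $I_1\cup\dots\cup I_r$, or $g(I_i)=I_j$ for some $j$.
   Context: A domain is a non-empty disjoint union of finitely many oriented circles and oriented half-open bounded intervals closed on the left; a subdomain is a subset that is itself a domain. $\mathrm{IET}(\mathcal{D})$ is the group of bijections of $\mathcal{D}$ that are orientation-preserving piecewise isometries, left-continuous, with finitely many discontinuity points. For a finitely generated $G<\mathrm{IET}(\mathcal{D})$: $G$ is irreducible on a $G$-invariant subdomain $J$ if every $G$-orbit in $J$ is dense in $J$; the irreducible components of $G$ are the members of the unique finite collection of pairwise disjoint $G$-invariant subdomains on each of which $G$ is irreducible and such that $G$ acts as a finite group on the complement of their union. $G$ is stable if every subdomain invariant under a finite index subgroup of $G$ is $G$-invariant. An element $a$ is called stable (resp. irreducible) if $\langle a\rangle$ is stable (resp. irreducible on $\mathcal{D}$), and its irreducible components are those of $\langle a\rangle$. *)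

(* Defs.v *)
From HB Require Import structures.
From mathcomp Require Import all_boot all_order all_algebra.
From mathcomp Require Import classical_sets reals.
Unset Printing Implicit Defensive.
Import Order.TTheory GRing.Theory Num.Theory.
Local Open Scope ring_scope.
Local Open Scope classical_set_scope.

(* A domain: finitely many (>= 1) components; component k is the half-open
   interval [0, len k) if circ k = false, or the circle R/(len k)Z (coordinatized
   by [0, len k)) if circ k = true. *)
 Record domain (R : realType) := Domain {
   ncomp : nat;
   len : 'I_ncomp -> R;
   circ : 'I_ncomp -> bool;
   len_gt0 : forall k, 0 < len k;
   ncomp_gt0 : (0 < ncomp)%N }.

Arguments ncomp {R}.
Arguments len {R}.
Arguments circ {R}.

Definition dpoint (R : realType) (D : domain R) :=
  {p : 'I_(ncomp D) * R | (0 <= p.2) && (p.2 < len D p.1)}.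

Arguments dpoint {R}.

Definition comp (R : realType) (D : domain R) (p : dpoint D) : 'I_(ncomp D) := (val p).1.
Arguments comp {R D}.

Definition coord (R : realType) (D : domain R) (p : dpoint D) : R := (val p).2.

Arguments coord {R D}.

Definition box (R : realType) (D : domain R) (k : 'I_(ncomp D)) (a b : R)
  : set (dpoint D) := [set p | comp p = k /\ a <= coord p < b].

Arguments box {R D}.

Definition subdomain (R : realType) (D : domain R) (J : set (dpoint D)) : Prop :=
  J !=set0 /\
  exists s : seq ('I_(ncomp D) * R * R),
    forall p, J p <-> exists2 t, t \in s & box t.1.1 t.1.2 t.2 p.

Arguments subdomain {R D}.

(* element of IET(D): a bijection given, on each piece [a,b) of a finite cover
   by half-open pieces, by a translation x |-> x + c into component k'. *)
Definition is_IET (R : realType) (D : domain R) (f : dpoint D -> dpoint D) : Prop :=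
  bijective f /\
  exists s : seq ('I_(ncomp D) * R * R * 'I_(ncomp D) * R),
    (forall p, exists2 t, t \in s & box t.1.1.1.1 t.1.1.1.2 t.1.1.2 p) /\
    (forall t, t \in s -> forall p, box t.1.1.1.1 t.1.1.1.2 t.1.1.2 p ->
        comp (f p) = t.1.2 /\ coord (f p) = coord p + t.2).

Arguments is_IET {R D}.

Definition cdist (R : realType) (D : domain R) (k : 'I_(ncomp D)) (x y : R) : R :=
  if circ D k then Num.min `|x - y| (len D k - `|x - y|) else `|x - y|.

Arguments cdist {R D}.

Definition dense_in (R : realType) (D : domain R) (O J : set (dpoint D)) : Prop :=
  forall p, J p -> forall e : R, 0 < e ->
    exists q, O q /\ J q /\ comp q = comp p /\ cdist (comp p) (coord p) (coord q) < e.

Arguments dense_in {R D}.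

(* orbit of x under the cyclic group <f> (f bijective): {f^k x | k in Z} *)
Definition orbit (T : Type) (f : T -> T) (x : T) : set T :=
  [set y | exists n m : nat, iter n f y = iter m f x].

Arguments orbit {T}.

Definition invariant (T : Type) (f : T -> T) (J : set T) : Prop := f @` J = J.

Arguments invariant {T}.

Definition irreducible_on (R : realType) (D : domain R) (f : dpoint D -> dpoint D)
  (J : set (dpoint D)) : Prop :=
  subdomain J /\ invariant f J /\ forall x, J x -> dense_in (orbit f x) J.

Arguments irreducible_on {R D}.

Definition irreducible_components (R : realType) (D : domain R)
  (f : dpoint D -> dpoint D) (r : nat) (I : 'I_r -> set (dpoint D)) : Prop :=
  (forall i, irreducible_on f (I i)) /\
  (forall i j, i != j -> I i `&` I j = set0) /\
  (exists n : nat, (0 < n)%N /\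
     forall x, ~ (exists i, I i x) -> iter n f x = x).

Arguments irreducible_components {R D} f {r}.

(* <f> is stable: finite index subgroups of <f> are the <f^n>, n >= 1 *)
Definition stable (R : realType) (D : domain R) (f : dpoint D -> dpoint D) : Prop :=
  forall n : nat, (0 < n)%N -> forall J : set (dpoint D),
    subdomain J -> invariant (iter n f) J -> invariant f J.

Arguments stable {R D}.

(* Main.v *)
Require Import Defs.
From HB Require Import structures.
From mathcomp Require Import all_boot all_order all_algebra.
From mathcomp Require Import boolp classical_sets reals.
From mathcomp Require Import lra.
Import Order.TTheory GRing.Theory Num.Theory.
Local Open Scope classical_set_scope.
Local Open Scope ring_scope.
Local Notation coord := Defs.coord.
Local Notation comp := Defs.comp.
Local Notation orbit := Defs.orbit.
Local Notation invariant := Defs.invariant.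
Local Notation box := Defs.box.
Local Notation stable := Defs.stable.

Section Aux.
Variables (R : realType) (D : domain R).
Implicit Types (p q : dpoint D).

Lemma coord_ge0 p : 0 <= coord p.
Proof. by case/andP: (proj2_sig p). Qed.
Lemma coord_lt p : coord p < len D (comp p).
Proof. by case/andP: (proj2_sig p). Qed.

Lemma dp_eq p q : comp p = comp q -> coord p = coord q -> p = q.
Proof.
case: p q => [[k x] Hp] [[k' y] Hq]; rewrite /comp /coord /= => Ek Ex.
subst; apply: val_inj => //.
Qed.

Definition mkp (k : 'I_(ncomp D)) (x : R) (H : (0 <= x) && (x < len D k)) : dpoint D :=
  exist (fun p : 'I_(ncomp D) * R => (0 <= p.2) && (p.2 < len D p.1)) (k, x) H.

Lemma mkp_ex (k : 'I_(ncomp D)) (x : R) : 0 <= x -> x < len D k ->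
  exists p : dpoint D, comp p = k /\ coord p = x.
Proof.
move=> h1 h2; have H : (0 <= x) && (x < len D k) by rewrite h1 h2.
by exists (mkp k x H).
Qed.

Lemma minpos {e1 e2 : R} : 0 < e1 -> 0 < e2 -> exists e, 0 < e /\ e <= e1 /\ e <= e2.
Proof.
move=> h1 h2; exists (Num.min e1 e2); rewrite lt_min h1 h2 ge_min lexx ge_min lexx orbT.
by split.
Qed.

Lemma cdist_le (k : 'I_(ncomp D)) (x y : R) : cdist k x y <= `|x - y|.
Proof. rewrite /cdist; case: (circ D k) => //; by rewrite ge_min lexx. Qed.

Lemma hit {O A : set (dpoint D)} {k : 'I_(ncomp D)} {s e : R} : dense_in O A -> 0 <= s -> 0 < e ->
  s + e <= len D k ->
  (forall q, comp q = k -> s <= coord q -> coord q < s + e -> A q) ->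
  exists q, O q /\ A q /\ comp q = k /\ s <= coord q /\ coord q < s + e.
Proof.
move=> dO s0 e0 sel box.
have [p [pk px]] := @mkp_ex k (s + e/2) ltac:(lra) ltac:(lra).
have Ap : A p by apply: box; rewrite ?px //; lra.
have [q [Oq [Aq [qk dq]]]] := dO p Ap (e/2) ltac:(lra).
have q0 := coord_ge0 q; have ql := coord_lt q.
rewrite qk pk in ql.
have hd : `|coord p - coord q| < e / 2.
  move: dq; rewrite /cdist pk; case: (circ D k) => //.
  rewrite gt_min => /orP [] // h; exfalso.
  move: h; rewrite px.
  case: (lerP 0 (s + e / 2 - coord q)) => h.
    rewrite ger0_norm //; lra.
  rewrite ltr0_norm //; lra.
exists q; split => //; split => //; split; first by rewrite qk.
move: hd; rewrite px; case: (lerP 0 (s + e / 2 - coord q)) => h.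
  rewrite ger0_norm // => ?; lra.
rewrite ltr0_norm // => ?; lra.
Qed.


Definition LT (f : dpoint D -> dpoint D) := forall p, exists e : R, 0 < e /\
  forall q, comp q = comp p -> coord p <= coord q -> coord q < coord p + e ->
   comp (f q) = comp (f p) /\ coord (f q) = coord (f p) + (coord q - coord p).

Definition RO (A : set (dpoint D)) := forall p, A p -> exists e : R, 0 < e /\
  forall q, comp q = comp p -> coord p <= coord q -> coord q < coord p + e -> A q.

Lemma LT_comp {f h} : LT f -> LT h -> LT (fun x => h (f x)).
Proof.
move=> Lf Lh p; have [e1 [e10 H1]] := Lf p; have [e2 [e20 H2]] := Lh (f p).
have [e [e0 [ee1 ee2]]] := minpos e10 e20.
exists e; split => // q qc q1 q2.
have [c1 d1] := H1 q qc q1 ltac:(lra).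
have [c2 d2] := H2 (f q) c1 ltac:(lra) ltac:(lra).
split => //; rewrite d2 d1; lra.
Qed.

Lemma LT_iter {f} n : LT f -> LT (iter n f).
Proof.
move=> Lf; elim: n => [|n IH] /=.
  move=> p; exists 1; split => // q qc _ _; split => //; lra.
by move=> p; have := LT_comp IH Lf p.
Qed.

Lemma IET_LT {f} : is_IET f -> LT f.
Proof.
move=> [_ [s [cov rule]]] p.
have [t ts bp] := cov p.
case: bp => pk /andP [c1 c2].
exists (t.1.1.2 - coord p); split; first lra.
move=> q qc q1 q2.
have bq : box t.1.1.1.1 t.1.1.1.2 t.1.1.2 q.
  split; first by rewrite qc.
  apply/andP; split; lra.
have [r1 r2] := rule t ts q bq.
have [r3 r4] := rule t ts p (conj pk (introT andP (conj c1 c2))).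
split; first by rewrite r1 r3.
rewrite r2 r4; lra.
Qed.

Lemma RO_img {f A} : LT f -> RO A -> RO (f @` A).
Proof.
move=> Lf RA _ [p Ap <-].
have [e1 [e10 H1]] := Lf p; have [e2 [e20 H2]] := RA p Ap.
have l0 : 0 < len D (comp p) - coord p by have := coord_lt p; lra.
have [e' [e'0 [ee1 ee2]]] := minpos e10 e20.
have [e [e0 [ee ee3]]] := minpos e'0 l0.
exists e; split => // q' qc q1 q2.
have p0 := coord_ge0 p.
have [pp [ppc ppx]] := @mkp_ex (comp p) (coord p + (coord q' - coord (f p)))
   ltac:(lra) ltac:(lra).
have App : A pp by apply: H2; rewrite ?ppx //; lra.
have [c1 d1] := H1 pp ppc ltac:(lra) ltac:(lra).
exists pp => //; apply: dp_eq; first by rewrite c1 qc.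
rewrite d1 ppx; lra.
Qed.

Lemma dense_mono {O O' A : set (dpoint D)} : O `<=` O' -> dense_in O A -> dense_in O' A.
Proof.
move=> sub dO p Ap e e0; have [q [Oq rest]] := dO p Ap e e0.
by exists q; split => //; apply: sub.
Qed.

Lemma DT {f} {O A : set (dpoint D)} : LT f -> RO A -> dense_in O A ->
  dense_in (f @` O) (f @` A).
Proof.
move=> Lf RA dO _ [p Ap <-] eps eps0.
have [e1 [e10 H1]] := Lf p; have [e2 [e20 H2]] := RA p Ap.
have l0 : 0 < len D (comp p) - coord p by have := coord_lt p; lra.
have [e' [e'0 [ee1 ee2]]] := minpos e10 e20.
have [e'' [e''0 [ee ee3]]] := minpos e'0 l0.
have [e [e0 [ee' ee4]]] := minpos e''0 eps0.
have p0 := coord_ge0 p.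
have bx : forall q, comp q = comp p -> coord p <= coord q -> coord q < coord p + e -> A q.
  by move=> q qc q1 q2; apply: H2 => //; lra.
have [q [Oq [Aq [qc [q1 q2]]]]] := hit dO p0 e0 ltac:(lra) bx.
have [c1 d1] := H1 q qc q1 ltac:(lra).
exists (f q); split; first by exists q.
split; first by exists q.
split => //.
apply: (le_lt_trans (cdist_le _ _ _)).
rewrite d1; rewrite ler0_norm; lra.
Qed.

Lemma inv_fwd {f} {B : set (dpoint D)} {x} : f @` B = B -> B x -> B (f x).
Proof. by move=> Bi Bx; rewrite -Bi; exists x. Qed.

Lemma inv_bwd {f} {B : set (dpoint D)} {x} : injective f -> f @` B = B -> B (f x) -> B x.
Proof. by move=> fi Bi; rewrite -{1}Bi => -[w Bw /fi <-]. Qed.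

Lemma inv_fwd_iter {f} {B : set (dpoint D)} {n x} : f @` B = B -> B x -> B (iter n f x).
Proof. move=> Bi Bx; elim: n => //= n IH; exact: (inv_fwd Bi IH). Qed.

Lemma inv_bwd_iter {f} {B : set (dpoint D)} n {x} : injective f -> f @` B = B ->
  B (iter n f x) -> B x.
Proof.
move=> fi Bi; elim: n => //= n IH H; apply: IH; exact: (inv_bwd fi Bi).
Qed.

Lemma absorb f (A B : set (dpoint D)) y : injective f -> f @` B = B ->
  (forall x, A x -> dense_in (orbit f x) A) -> A y -> B y -> RO A -> RO B ->
  A `<=` B.
Proof.
move=> fi Bi dA Ay By RA RB p Ap.
have [e1 [e10 H1]] := RA y Ay; have [e2 [e20 H2]] := RB y By.
have l0 : 0 < len D (comp y) - coord y by have := coord_lt y; lra.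
have [e' [e'0 [ee1 ee2]]] := minpos e10 e20.
have [e [e0 [ee ee3]]] := minpos e'0 l0.
have y0 := coord_ge0 y.
have bx : forall q, comp q = comp y -> coord y <= coord q -> coord q < coord y + e -> A q.
  by move=> q qc q1 q2; apply: H1 => //; lra.
have [q [[n [m Oq]] [Aq [qc [q1 q2]]]]] := hit (dA p Ap) y0 e0 ltac:(lra) bx.
have Bq : B q by apply: H2 => //; lra.
apply: (inv_bwd_iter m fi Bi); rewrite -Oq.
exact: inv_fwd_iter.
Qed.


Lemma iter_injective (f : dpoint D -> dpoint D) n : injective f -> injective (iter n f).
Proof. by move=> fi; elim: n => //= n IH x y /fi /IH. Qed.

Lemma iter_fix (f : dpoint D -> dpoint D) x k (c : nat) : iter k f x = x -> iter (c * k) f x = x.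
Proof. by move=> H; elim: c => //= c IH; rewrite mulSn iterD IH. Qed.

Lemma iter_mod (f : dpoint D -> dpoint D) x k M : iter k f x = x ->
  iter M f x = iter (M %% k) f x.
Proof. by move=> H; rewrite {1}(divn_eq M k) addnC iterD iter_fix. Qed.

Lemma iter_swap (f : dpoint D -> dpoint D) n m x : iter n f (iter m f x) = iter m f (iter n f x).
Proof. by rewrite -!iterD addnC. Qed.

Lemma orbit_fin (f : dpoint D -> dpoint D) x k y : injective f -> iter k f x = x -> (0 < k)%N ->
  orbit f x y -> exists2 j, (j < k)%N & y = iter j f x.
Proof.
move=> fi Hk k0 [n [m E]].
have Hy : iter k f y = y.
  apply: (@iter_injective f n fi).
  by rewrite iter_swap E iter_swap Hk.
have Ey : y = iter (k * n - n + m) f x.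
  rewrite iterD -E -iterD subnK; last by rewrite leq_pmull.
  
  by rewrite mulnC iter_fix.
exists ((k * n - n + m) %% k)%N; first by rewrite ltn_mod.
by rewrite Ey -iter_mod.
Qed.

Lemma avoid (N : nat) (F : nat -> dpoint D) (k : 'I_(ncomp D)) (u v : R) : u < v ->
  exists u' v', u <= u' /\ u' < v' /\ v' <= v /\
   forall j, (j < N)%N -> comp (F j) = k -> ~ (u' <= coord (F j) /\ coord (F j) < v').
Proof.
move=> uv; elim: N => [|N [u1 [v1 [h1 [h2 [h3 h4]]]]]].
  exists u, v; refine (conj _ (conj _ (conj _ _))) => //; by rewrite lexx.
case: (ltrP (coord (F N)) ((u1 + v1) / 2)) => hz.
  exists ((u1 + v1) / 2), v1; refine (conj _ (conj _ (conj _ _))); [lra|lra|lra|].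
  move=> j; rewrite ltnS leq_eqVlt => /orP [/eqP -> _|jN jk]; first by move=> [a b]; lra.
  move=> [a b]; apply: (h4 j jN jk); split; lra.
exists u1, ((u1 + v1) / 2); refine (conj _ (conj _ (conj _ _))); [lra|lra|lra|].
move=> j; rewrite ltnS leq_eqVlt => /orP [/eqP -> _|jN jk]; first by move=> [a b]; lra.
move=> [a b]; apply: (h4 j jN jk); split; lra.
Qed.

Lemma notdense_fin (f : dpoint D -> dpoint D) (A : set (dpoint D)) x k :
  injective f -> A x -> RO A -> dense_in (orbit f x) A -> iter k f x = x -> (0 < k)%N -> False.
Proof.
move=> fi Ax RA dA Hk k0.
have [e1 [e10 H1]] := RA x Ax.
have l0 : 0 < len D (comp x) - coord x by have := coord_lt x; lra.
have [e [e0 [ee1 ee2]]] := minpos e10 l0.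
have [u' [v' [h1 [h2 [h3 h4]]]]] := @avoid k (fun j => iter j f x) (comp x) (coord x) (coord x + e) ltac:(lra).
have x0 := coord_ge0 x.
have bx : forall q, comp q = comp x -> u' <= coord q -> coord q < u' + (v' - u') -> A q.
  by move=> q qc q1 q2; apply: H1 => //; lra.
have s0 : 0 <= u' by lra.
have d0 : 0 < v' - u' by lra.
have sl : u' + (v' - u') <= len D (comp x) by lra.
have [q [Oq [Aq [qc [q1 q2]]]]] := hit dA s0 d0 sl bx.
have [j jk Eq] := @orbit_fin f x k q fi Hk k0 Oq.
apply: (h4 j jk); rewrite -Eq //; split; lra.
Qed.


Lemma img_box {f : dpoint D -> dpoint D} {k1 k' : 'I_(ncomp D)} {c d t : R} (u v : R) :
  (forall p, box k1 c d p -> comp (f p) = k' /\ coord (f p) = coord p + t) ->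
  f @` (box k1 u v `&` box k1 c d) =
  box k' (Num.max (Num.max u c) 0 + t) (Num.min (Num.min v d) (len D k1) + t).
Proof.
move=> rule; apply/seteqP; split.
  move=> _ [p [[pk /andP [p1 p2]] [pk' /andP [p3 p4]]] <-].
  have [r1 r2] := rule p (conj pk (introT andP (conj p3 p4))).
  have hm : Num.max (Num.max u c) 0 <= coord p by rewrite !ge_max p1 p3 coord_ge0.
  have hn : coord p < Num.min (Num.min v d) (len D k1).
    by rewrite !lt_min p2 p4 -pk coord_lt.
  split => //; rewrite r2; apply/andP; split; lra.
move=> q [qk /andP [q1 q2]].
have m1 : u <= Num.max (Num.max u c) 0 by rewrite !le_max lexx.
have m2 : c <= Num.max (Num.max u c) 0 by rewrite !le_max lexx orbT.
have m3 : 0 <= Num.max (Num.max u c) 0 by rewrite !le_max lexx orbT.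
have n1 : Num.min (Num.min v d) (len D k1) <= v by rewrite !ge_min lexx.
have n2 : Num.min (Num.min v d) (len D k1) <= d by rewrite !ge_min lexx orbT.
have n3 : Num.min (Num.min v d) (len D k1) <= len D k1 by rewrite !ge_min lexx orbT.
have [p [pk px]] := @mkp_ex k1 (coord q - t) ltac:(lra) ltac:(lra).
have bp : box k1 c d p by split => //; rewrite px; apply/andP; split; lra.
exists p.
  split => //; split => //; rewrite px; apply/andP; split; lra.
have [r1 r2] := rule p bp.
by apply: dp_eq; rewrite ?r1 ?qk // r2 px; lra.
Qed.

Lemma SubImg {f : dpoint D -> dpoint D} {J : set (dpoint D)} :
  is_IET f -> subdomain J -> subdomain (f @` J).
Proof.
move=> [_ [s' [cov rule]]] [[x0 Jx0] [s Hs]].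
split; first by exists (f x0), x0.
exists [seq (if b.1.1 == pc.1.1.1.1 then
   (pc.1.2, Num.max (Num.max b.1.2 pc.1.1.1.2) 0 + pc.2,
            Num.min (Num.min b.2 pc.1.1.2) (len D b.1.1) + pc.2)
   else (b.1.1, 0, 0)) | b <- s, pc <- s'].
move=> q; split.
  move=> [p Jp <-].
  have [b bs bp] := (Hs p).1 Jp.
  have [pc pcs pcp] := cov p.
  have E : b.1.1 = pc.1.1.1.1 by rewrite -bp.1 -pcp.1.
  eexists; first exact: (allpairs_f _ bs pcs).
  rewrite /= E eqxx /=.
  rewrite -(img_box b.1.2 b.2 (rule pc pcs)).
  by exists p => //; split => //; rewrite -E.
move=> [t /allpairsP [[b pc] [bs pcs ->]]] /=.
case: eqP => [E|_] qb; last first.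
  by exfalso; case: qb => _ /andP [h1 h2]; lra.
rewrite E -(img_box b.1.2 b.2 (rule pc pcs)) in qb.
case: qb => p [pb pcb] <-; exists p => //.
by apply/(Hs p); exists b => //; rewrite E.
Qed.

Lemma IET_inv {g ginv : dpoint D -> dpoint D} :
  is_IET g -> cancel g ginv -> cancel ginv g -> is_IET ginv.
Proof.
move=> [_ [s' [cov rule]]] gK ginvK.
split; first by exists g.
exists [seq (pc.1.2, Num.max (Num.max pc.1.1.1.2 pc.1.1.1.2) 0 + pc.2,
   Num.min (Num.min pc.1.1.2 pc.1.1.2) (len D pc.1.1.1.1) + pc.2, pc.1.1.1.1, - pc.2) | pc <- s'].
split.
  move=> q; have [pc pcs pcp] := cov (ginv q).
  exists (pc.1.2, Num.max (Num.max pc.1.1.1.2 pc.1.1.1.2) 0 + pc.2,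
   Num.min (Num.min pc.1.1.2 pc.1.1.2) (len D pc.1.1.1.1) + pc.2, pc.1.1.1.1, - pc.2).
    exact: (map_f _ pcs).
  rewrite /= -(img_box pc.1.1.1.2 pc.1.1.2 (rule pc pcs)).
  by exists (ginv q) => //.
move=> t /mapP [pc pcs ->] q /=.
rewrite -(img_box pc.1.1.1.2 pc.1.1.2 (rule pc pcs)) => -[p [pb pcb] <-].
rewrite gK; have [r1 r2] := rule pc pcs p pcb.
split; first by case: pcb.
rewrite r2; lra.
Qed.


Lemma half (f h : dpoint D -> dpoint D) (r : nat) (Kf : 'I_r -> set (dpoint D))
  (Ij : set (dpoint D)) (i : 'I_r) (y0 : dpoint D) (N : nat) :
 injective f -> injective h -> LT f -> stable f -> (forall x, f (h x) = h (f x)) ->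
 (forall l, h @` Kf l = Kf l) -> (forall l, RO (Kf l)) ->
 (forall l x, Kf l x -> dense_in (orbit h x) (Kf l)) ->
 (0 < N)%N -> (forall z, ~ (exists l, Kf l z) -> iter N h z = z) ->
 subdomain (Kf i) -> f @` Ij = Ij -> RO Ij -> (forall x, Ij x -> dense_in (orbit f x) Ij) ->
 Kf i y0 -> Ij y0 -> Ij `<=` Kf i.
Proof.
move=> fi hi Lf Sf fh Kinv KRO Kd N0 HN Ksub Iinv IRO Id Ky Iy.
set K := Kf i.
have c1 : forall m x, iter m f (h x) = h (iter m f x).
  by elim=> //= m IH x; rewrite IH fh.
have iter_fh : forall m n x, iter m f (iter n h x) = iter n h (iter m f x).
  by move=> m; elim=> //= n IH x; rewrite c1 IH.
have uniq : forall (A B : set (dpoint D)) z, h @` A = A -> h @` B = B ->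
    (forall x, A x -> dense_in (orbit h x) A) ->
    (forall x, B x -> dense_in (orbit h x) B) -> RO A -> RO B -> A z -> B z -> A = B.
  move=> A B z hA hB dA dB RA RB Az Bz; apply/seteqP; split.
    exact: (@absorb h A B z hi hB dA Az Bz RA RB).
  exact: (@absorb h B A z hi hA dB Bz Az RB RA).
have step1 : forall m, exists l, iter m f @` K = Kf l.
  move=> m; set z := iter m f y0.
  have [l Kl] : exists l, Kf l z.
    case: (pselect (exists l, Kf l z)) => // nz; exfalso.
    have := HN z nz; rewrite /z -iter_fh => /(@iter_injective f m fi) Hy.
    exact: (@notdense_fin h K y0 N hi Ky (KRO i) (Kd i y0 Ky) Hy N0).
  exists l; apply: (uniq _ _ z).
  - apply/seteqP; split.
      move=> _ [w [x Kx <-] <-]; exists (h x); first exact: (inv_fwd (Kinv i) Kx).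
      by rewrite c1.
    move=> _ [x Kx <-]; have Kx' : (h @` K) x by rewrite /K (Kinv i).
    case: Kx' => w Kw Ew.
    rewrite -Ew; exists (iter m f w); first by exists w.
    by rewrite c1.
  - exact: Kinv.
  - move=> _ [x Kx <-].
    apply: (dense_mono _ (DT (LT_iter m Lf) (KRO i) (Kd i x Kx))).
    by move=> _ [u [n [k E]] <-]; exists n, k; rewrite -!iter_fh E.
  - exact: Kd.
  - exact: (RO_img (LT_iter m Lf) (KRO i)).
  - exact: KRO.
  - by exists y0.
  - exact: Kl.
case: (boolp.choice (fun m : 'I_r.+1 => step1 m)) => F HF.
have : ~~ injectiveb F.
  by apply/negP => /injectiveP Finj; have := leq_card _ Finj; rewrite !card_ord ltnn.
case/injectivePn => m1 [m2 neq Feq].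
have key : forall a b, (a < b)%N -> iter a f @` K = iter b f @` K -> iter (b - a) f @` K = K.
  move=> a b ab E; apply/seteqP; split.
    move=> _ [x Kx <-].
    have : (iter a f @` K) (iter a f (iter (b - a) f x)).
      by rewrite E; exists x => //; rewrite -iterD subnKC // ltnW.
    by case=> w Kw /(@iter_injective f a fi) <-.
  move=> x Kx.
  have : (iter b f @` K) (iter a f x) by rewrite -E; exists x.
  case=> w Kw Ew; exists w => //.
  by apply: (@iter_injective f a fi); rewrite -Ew -iterD subnKC // ltnW.
have [n [n0 Hn]] : exists n, (0 < n)%N /\ iter n f @` K = K.
  have E : iter m1 f @` K = iter m2 f @` K by rewrite (HF m1) (HF m2) Feq.
  case: (ltngtP m1 m2) => [lt|gt|eq].
  - by exists (m2 - m1)%N; split; [rewrite subn_gt0 | exact: key].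
  - by exists (m1 - m2)%N; split; [rewrite subn_gt0 | exact: (key _ _ gt (esym E))].
  - by exfalso; move: neq; rewrite -val_eqE /= eq eqxx.
have Kfi : f @` K = K := Sf n n0 K Ksub Hn.
exact: (@absorb f Ij K y0 fi Kfi Id Iy Ky IRO (KRO i)).
Qed.


Lemma sub_RO {J : set (dpoint D)} : subdomain J -> RO J.
Proof.
move=> [_ [s Hs]] p Jp; have [t ts [pk /andP [p1 p2]]] := (Hs p).1 Jp.
exists (t.2 - coord p); split; first lra.
move=> q qc q1 q2; apply/(Hs q); exists t => //; split; first by rewrite qc.
apply/andP; split; lra.
Qed.

Lemma main_aux (a : dpoint D -> dpoint D)
  (r : nat) (I : 'I_r -> set (dpoint D)) (g ginv : dpoint D -> dpoint D) :
  is_IET a -> stable a -> irreducible_components a I ->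
  is_IET g -> cancel g ginv -> cancel ginv g ->
  (forall x, g (a (ginv (a x))) = a (g (a (ginv x)))) ->
  forall i : 'I_r,
    (g @` I i) `&` (\bigcup_(j in [set: 'I_r]) I j) = set0 \/
    exists j : 'I_r, g @` I i = I j.
Proof.
move=> Ha Hst [Icomp [Idisj [N [N0 HN]]]] Hg gK ginvK Hc i.
pose b := fun x => g (a (ginv x)).
have ai : injective a by case: Ha => -[a' aK _] _; exact: can_inj aK.
have gi : injective g := can_inj gK.
have ginvi : injective ginv := can_inj ginvK.
have bi : injective b by move=> x y /gi /ai /ginvi.
have La := IET_LT Ha; have Lg := IET_LT Hg.
have Hginv := IET_inv Hg gK ginvK.
have Lginv := IET_LT Hginv.
have Lb : LT b := LT_comp (LT_comp Lginv La) Lg.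
have iterb : forall n x, iter n b x = g (iter n a (ginv x)).
  by elim=> [x|n IH x] /=; [rewrite ginvK | rewrite IH /b gK].
have Sb : stable b.
  move=> n n0 J Jsub HJ.
  have Jg : subdomain (ginv @` J) := SubImg Hginv Jsub.
  have Han : invariant (iter n a) (ginv @` J).
    apply/seteqP; split.
      move=> _ [_ [x Jx <-] <-]; exists (iter n b x); first exact: (inv_fwd HJ Jx).
      by rewrite iterb gK.
    move=> _ [x Jx <-].
    have Jx' : (iter n b @` J) x by rewrite HJ.
    case: Jx' => w Jw <-.
    by exists (ginv w); [exists w | rewrite iterb gK].
  have HaJ := Hst n n0 _ Jg Han.
  apply/seteqP; split.
    move=> _ [x Jx <-].
    have : (ginv @` J) (a (ginv x)) by rewrite -HaJ; exists (ginv x) => //; exists x.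
    by case=> w Jw Ew; rewrite /b -Ew ginvK.
  move=> x Jx.
  have : (a @` (ginv @` J)) (ginv x) by rewrite HaJ; exists x.
  case=> _ [w Jw <-] E; exists w => //.
  by rewrite /b E ginvK.
pose Kf := fun l => g @` I l.
have Kinv : forall l, b @` Kf l = Kf l.
  move=> l; have Il := (Icomp l).2.1.
  apply/seteqP; split.
    move=> _ [_ [x Ix <-] <-]; exists (a x); first exact: (inv_fwd Il Ix).
    by rewrite /b gK.
  move=> _ [x Ix <-].
  have Ix' : (a @` I l) x by rewrite Il.
  case: Ix' => w Iw <-.
  by exists (g w); [exists w | rewrite /b gK].
have IRO : forall l, RO (I l) := fun l => sub_RO (Icomp l).1.
have KRO : forall l, RO (Kf l) := fun l => RO_img Lg (IRO l).
have Kd : forall l x, Kf l x -> dense_in (orbit b x) (Kf l).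
  move=> l _ [w Iw <-].
  apply: (dense_mono _ (DT Lg (IRO l) ((Icomp l).2.2 w Iw))).
  by move=> _ [u [n [k E]] <-]; exists n, k; rewrite !iterb !gK E.
have HNb : forall z, ~ (exists l, Kf l z) -> iter N b z = z.
  move=> z nz; rewrite iterb HN ?ginvK //.
  by move=> [l Il]; apply: nz; exists l; exists (ginv z).
case: (pselect (exists y0, (g @` I i) y0 /\ exists j, I j y0)).
  move=> [y0 [Ky [j Iy]]]; right; exists j.
  apply/seteqP; split.
    exact: (@half b a r I (g @` I i) j y0 N bi ai Lb Sb Hc
      (fun l => (Icomp l).2.1) IRO (fun l => (Icomp l).2.2) N0 HN (Icomp j).1
      (Kinv i) (KRO i) (Kd i) Iy Ky).
  exact: (@half a b r Kf (I j) i y0 N ai bi La Hst (fun x => esym (Hc x))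
      Kinv KRO Kd N0 HNb (SubImg Hg (Icomp i).1) (Icomp j).2.1 (IRO j) (Icomp j).2.2 Ky Iy).
move=> nz; left; apply/seteqP; split => [x [Kx [j _ Ijx]]|x //].
by exfalso; apply: nz; exists x; split => //; exists j.
Qed.

End Aux.

Close Scope ring_scope.

Theorem mainTheorem11 (R : realType) (D : domain R) (a : dpoint D -> dpoint D)
  (r : nat) (I : 'I_r -> set (dpoint D)) (g ginv : dpoint D -> dpoint D) :
  is_IET a -> stable a -> irreducible_components a I ->
  is_IET g -> cancel g ginv -> cancel ginv g ->
  (forall x, g (a (ginv (a x))) = a (g (a (ginv x)))) ->
  forall i : 'I_r,
    (g @` I i) `&` (\bigcup_(j in [set: 'I_r]) I j) = set0 \/
    exists j : 'I_r, g @` I i = I j.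
Proof. exact: main_aux. Qed.
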